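(* In the BICM setting described in the context, with message $1$ transmitted and $\mathsf D$ the ORBGRAND metric, $\lim_{N\to\infty}\operatorname{var}\mathsf D(1)=0$.
   Context: Let $m\ge1$, let $\mathcal S$ be a constellation with $|\mathcal S|=2^m$, and let $\mu:\{+1,-1\}^m\to\mathcal S$ be a bijective labeling. For $s\in\mathcal S$, let $b_j(s)$ be the $j$-th coordinate of $\mu^{-1}(s)$. The channel is memoryless with output space $\mathbb R^d$ (norm $|\cdot|$) and transition densities $p(y\mid s)$. For $j=1,\dots,m$ define $$q_j^\pm(y)=2^{-(m-1)}\sum_{s:\,b_j(s)=\pm1}p(y\mid s).$$ For each $j$, let $\mathsf X_j$ be uniform on $\{\pm1\}$ and let $\mathsf Y$ have density $q_j^{\mathsf X_j}$ given $\mathsf X_j$. Let $\Psi_j$ be the CDF of $|\ln(q_j^+(\mathsf Y)/q_j^-(\mathsf Y))|$, and let $\bar\Psi=\frac1m\sum_j\Psi_j$. Assume that for each $j$: (A1) there exist $M_1>0$, $a>0$ and a polynomial $S_1$ with $q_j^\pm(y)<S_1(|y|)e^{-a|y|}$ for $|y|>M_1$; (A2) there exist $M_2>0$ and a polynomial $S_2$ with $|\ln(q_j^+(y)/q_j^-(y))|<S_2(|y|)$ for $|y|>M_2$; (A3) $\Psi_j$, $\Psi_j^{-1}$, $\bar\Psi$ and $\bar\Psi^{-1}$ are smooth with finite first, second and third derivatives. Random coding: the codebook has $\lceil e^{NR}\rceil$ codewords, each consisting of bits $\mathsf X_{i,j}(w)$, $i\le N$, $j\le m$, all i.i.d. uniform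 on $\{\pm1\}$. Message $1$ is transmitted. Symbol $i$ is $s_i(1)=\mu(\mathsf X_{i,1}(1),\dots,\mathsf X_{i,m}(1))$, and the outputs $\mathsf Y_i$ are conditionally independent with densities $p(\cdot\mid s_i(1))$. Let $\mathsf T_{i,j}=\ln(q_j^+(\mathsf Y_i)/q_j^-(\mathsf Y_i))$. Let $\mathsf R_{i,j}$ be the rank of $|\mathsf T_{i,j}|$ among all $mN$ values (rank $1$ is the smallest). Let $\mathrm{sgn}(t)=1$ if $t\ge0$ and $-1$ otherwise. The ORBGRAND metric is $$\mathsf D(w)=\frac1{mN}\sum_{i,j}\frac{\mathsf R_{i,j}}{mN}\mathbf 1\big(\mathrm{sgn}(\mathsf T_{i,j})\mathsf X_{i,j}(w)<0\big).$$ *)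

(* Defs.v *)
From HB Require Import structures.
From mathcomp Require Import all_boot all_order all_algebra.
From mathcomp Require Import all_classical all_reals all_analysis.
Set Implicit Arguments. Unset Strict Implicit. Unset Printing Implicit Defensive.
Import Order.TTheory GRing.Theory Num.Theory.
Import numFieldNormedType.Exports.
Local Open Scope classical_set_scope.
Local Open Scope ring_scope.

(* Iterated one-dimensional Lebesgue integrals; by Tonelli, for nonnegative
   measurable f this is the integral of f w.r.t. d-dimensional Lebesgue measure. *)
Fixpoint lebint {R : realType} (d : nat) : (d.-tuple R -> \bar R) -> \bar R :=
  match d return (d.-tuple R -> \bar R) -> \bar R with
  | 0 => fun f => f [tuple]
  | d'.+1 => fun f =>
      (\int[@lebesgue_measure R]_(x in [set: R])
          lebint (fun t : d'.-tuple R => f [tuple of x :: t]))%E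
  end.

Definition eucl {R : realType} (d : nat) (y : d.-tuple R) : R :=
  Num.sqrt (\sum_(k < d) (tnth y k) ^+ 2).

Definition pm {R : realType} (b : bool) : R := if b then 1 else -1.

Definition sgnR {R : realType} (t : R) : R := if 0 <= t then 1 else -1.

(* q_j^b(y) = 2^{-(m-1)} sum_{s : b_j(s) = b} p(y|s); the sum over constellation
   points s with b_j(s) = b is written as the sum over labels x with x_j = b,
   s = mu x  (mu is a bijection). *)
Definition qbit {R : realType} (m d : nat) (S : finType)
  (mu : {ffun 'I_m -> bool} -> S) (p : S -> d.-tuple R -> R)
  (j : 'I_m) (b : bool) (y : d.-tuple R) : R :=
  ((2 ^ (m - 1))%:R)^-1 * \sum_(x : {ffun 'I_m -> bool} | x j == b) p (mu x) y.

Definition LLR {R : realType} (m d : nat) (S : finType)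
  (mu : {ffun 'I_m -> bool} -> S) (p : S -> d.-tuple R -> R)
  (j : 'I_m) (y : d.-tuple R) : R :=
  ln (qbit mu p j true y / qbit mu p j false y).

(* Psi_j(t) = P(|ln(q_j^+(Y)/q_j^-(Y))| <= t) where X_j uniform on {+-1} and Y
   has density q_j^{X_j} given X_j *)
Definition Psi {R : realType} (m d : nat) (S : finType)
  (mu : {ffun 'I_m -> bool} -> S) (p : S -> d.-tuple R -> R)
  (j : 'I_m) (t : R) : R :=
  2^-1 * fine (lebint (fun y => (((`|LLR mu p j y| <= t)%R)%:R * qbit mu p j true y)%:E))
  + 2^-1 * fine (lebint (fun y => (((`|LLR mu p j y| <= t)%R)%:R * qbit mu p j false y)%:E)).

Definition Psibar {R : realType} (m d : nat) (S : finType)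
  (mu : {ffun 'I_m -> bool} -> S) (p : S -> d.-tuple R -> R) (t : R) : R :=
  (m%:R)^-1 * \sum_(j < m) Psi mu p j t.

Definition cdf_inv {R : realType} (F : R -> R) (u : R) : R :=
  inf [set t | u <= F t].

Definition smooth_on {R : realType} (D : set R) (f : R -> R) : Prop :=
  forall n t, D t -> derivable (derive1n n f) t 1.

(* position (i,j) |-> i*m + j, used only to break ties in the ranking *)
Definition enc (N m : nat) (k : 'I_N * 'I_m) : nat := (k.1 * m + k.2)%N.

(* rank of |T k| among all mN values (rank 1 = smallest); ties (a null event
   under the assumptions) are broken by the index order enc. *)
Definition rankT {R : realType} (N m : nat) (T : 'I_N * 'I_m -> R)
  (k : 'I_N * 'I_m) : nat :=
  #|[set k' : 'I_N * 'I_m | (`|T k'| < `|T k|)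
        || ((`|T k'| == `|T k|) && (enc k' <= enc k)%N)]|.

Definition orbgrand_D {R : realType} (N m : nat) (T : 'I_N * 'I_m -> R)
  (x : 'I_N -> {ffun 'I_m -> bool}) : R :=
  ((m * N)%:R)^-1 * \sum_(k : 'I_N * 'I_m)
      ((rankT T k)%:R / (m * N)%:R) * ((sgnR (T k) * pm (x k.1 k.2) < 0)%R)%:R.

Definition varP {R : realType} (d0 : measure_display) (Omega : measurableType d0)
  (P : probability Omega R) (f : Omega -> R) : R :=
  let mean := fine (\int[P]_w (f w)%:E)%E in
  fine (\int[P]_w ((f w - mean) ^+ 2)%:E)%E.

(* Main.v *)
Require Import Defs.
From HB Require Import structures.
From mathcomp Require Import all_boot all_order all_algebra.
From mathcomp Require Import all_classical all_reals all_analysis.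
From mathcomp Require Import ring lra measurable_realfun.
Import Order.TTheory GRing.Theory Num.Theory.
Import numFieldNormedType.Exports.
Local Open Scope classical_set_scope.
Local Open Scope ring_scope.
Set Implicit Arguments. Unset Strict Implicit. Unset Printing Implicit Defensive.


Section Fin.
Context (d0 : measure_display) (Omega : measurableType d0) (R : realType)
  (P : probability Omega R).

Definition Eof (I : eqType) (F : I -> set Omega) (s : seq I) : set Omega :=
  [set w | exists2 i, i \in s & F i w].

Lemma Eof_sum (I : eqType) (F : I -> set Omega) (s : seq I) :
  uniq s -> (forall i, measurable (F i)) ->
  (forall i j, i != j -> F i `&` F j = set0) ->
  measurable (Eof F s) /\ P (Eof F s) = (\sum_(i <- s) P (F i))%E.
Proof.
move=> + mF dF; elim: s => [|x s IH] /=.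
  have -> : Eof F [::] = set0 by apply/seteqP; split => w // [].
  by rewrite big_nil measure0.
move=> /andP[xs us]; have [mE PE] := IH us.
have -> : Eof F (x :: s) = F x `|` Eof F s.
  apply/seteqP; split => w.
    by move=> [i]; rewrite inE => /orP[/eqP->|iS]; [left|right; exists i].
  by case=> [Fx|[i iS Fi]]; [exists x; rewrite ?mem_head|exists i; rewrite // inE iS orbT].
split; first exact: measurableU.
rewrite big_cons measureU //; first by congr (_ + _); exact: PE.
apply/seteqP; split => w // [Fx [i iS Fi]].
have xi : x != i by apply: contraNneq xs => ->.
by have := dF _ _ xi; move/seteqP => [+ _] => /(_ w (conj Fx Fi)).
Qed.

Lemma meas_forall (G : nat -> set Omega) N : (forall i, measurable (G i)) ->
  measurable [set w | forall i, (i < N)%N -> G i w].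
Proof.
move=> mG.
have -> : [set w | forall i, (i < N)%N -> G i w] =
  \bigcap_i (if (i < N)%N then G i else setT).
  apply/seteqP; split => w /=.
    by move=> H i _; case: ifP => // /H.
  by move=> H i iN; have := H i I; rewrite iN.
by apply: bigcapT_measurable => i; case: ifP.
Qed.

End Fin.




Section Var.
Context (d0 : measure_display) (Omega : measurableType d0) (R : realType)
  (P : probability Omega R).

Definition pr (A : set Omega) : R := fine (P A).

Lemma Pfin (A : set Omega) : measurable A -> P A = (pr A)%:E.
Proof. by move=> mA; rewrite /pr fineK // fin_num_measure. Qed.

Lemma indic_L1 (A : set Omega) : measurable A -> \1_A \in Lfun P 1.
Proof. by move=> mA; apply/Lfun1_integrable; exact: integrable_indic. Qed.

Lemma E_sumL (I : Type) (s : seq I) (F : I -> Omega -> R) :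
  (forall i, F i \in Lfun P 1) ->
  (fun w => \sum_(i <- s) F i w) \in Lfun P 1 /\
  ('E_P[fun w => (\sum_(i <- s) F i w)%R] = \sum_(i <- s) 'E_P[F i])%E.
Proof.
move=> hF; elim: s => [|x s [IH1 IH2]].
  have -> : (fun w : Omega => \sum_(i <- [::]) F i w) = cst 0.
    by apply/funext => w; rewrite big_nil.
  by rewrite big_nil expectation_cst; split => //; exact: Lfun_cst.
have -> : (fun w => \sum_(i <- x :: s) F i w) = F x \+ (fun w => \sum_(i <- s) F i w).
  by apply/funext => w; rewrite big_cons.
split; first exact: rpredD.
by rewrite expectationD // IH2 big_cons.
Qed.

Lemma varP_cov (f : Omega -> R) : varP P f = fine (covariance P f f).
Proof.
by rewrite /varP covariance.unlock expectation.unlock; congr fine.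
Qed.

Lemma varP_sum (I : finType) (E : I -> set Omega) (c : R) :
  (forall a, measurable (E a)) ->
  varP P (fun w => c * \sum_a \1_(E a) w) =
  c ^+ 2 * \sum_a \sum_b (pr (E a `&` E b) - pr (E a) * pr (E b)).
Proof.
move=> mE.
set f := fun w => c * \sum_a \1_(E a) w.
have L1 a : \1_(E a) \in Lfun P 1 := indic_L1 (mE a).
have [Ls Es] := E_sumL (index_enum I) L1.
have Lf : f \in Lfun P 1.
  have -> : f = c *: (fun w => \sum_a \1_(E a) w) by [].
  exact: rpredZ.
have Ef : ('E_P[f] = (c * \sum_a pr (E a))%:E)%E.
  have fE : f = (c \o* (fun w => \sum_a \1_(E a) w))%R.
    by apply/funext => w; rewrite /f /= mulrC.
  rewrite fE.
  rewrite expectationZl // Es EFinM; congr (_ * _)%E.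
  rewrite -sumEFin; apply: eq_bigr => a _.
  by rewrite expectation_indic // Pfin.
have ff : (f * f)%R = c ^+ 2 \o* (fun w => \sum_a \sum_b \1_(E a `&` E b) w).
  apply/funext => w /=; rewrite [RHS]mulrC expr2 mulrACA; congr (_ * _).
  transitivity ((\sum_a (\1_(E a) w : R)) * (\sum_a (\1_(E a) w : R))); first by [].
  rewrite mulr_suml; apply: eq_bigr => a _; rewrite mulr_sumr; apply: eq_bigr => b _.
  by rewrite indicI.
have L2 a : (fun w => \sum_b \1_(E a `&` E b) w) \in Lfun P 1.
  by have [] := E_sumL (index_enum I) (fun b => indic_L1 (measurableI _ _ (mE a) (mE b))).
have [Lss Ess] := E_sumL (index_enum I) L2.
have Lff : (f * f)%R \in Lfun P 1.
  have -> : (f * f)%R = c ^+ 2 *: (fun w => \sum_a \sum_b \1_(E a `&` E b) w).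
    by rewrite ff; apply/funext => w /=; rewrite mulrC.
  exact: rpredZ.
rewrite varP_cov covarianceE // Ef ff expectationZl // Ess.
have -> : (\sum_(a <- index_enum I) 'E_P[fun w => (\sum_b \1_(E a `&` E b) w)%R] =
   (\sum_a \sum_b pr (E a `&` E b))%:E)%E.
  rewrite -sumEFin; apply: eq_bigr => a _.
  have [_ ->] := E_sumL (index_enum I) (fun b => indic_L1 (measurableI _ _ (mE a) (mE b))).
  rewrite -sumEFin; apply: eq_bigr => b _.
  by rewrite expectation_indic ?Pfin //; exact: measurableI.
rewrite -!EFinM -EFinB /=.
have -> : \sum_a \sum_b (pr (E a `&` E b) - pr (E a) * pr (E b)) =
   \sum_a \sum_b pr (E a `&` E b) - (\sum_a pr (E a)) * (\sum_a pr (E a)).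
  rewrite mulr_suml -sumrB; apply: eq_bigr => a _.
  by rewrite mulr_sumr -sumrB.
by rewrite mulrBr; congr (_ - _); ring.
Qed.

End Var.


Section Ind.
Context (d0 : measure_display) (Omega : measurableType d0) (R : realType)
  (P : probability Omega R).



Lemma lam (B : set Omega) : measurable B ->
  lambda_system setT [set A | measurable A /\ P (A `&` B) = (P A * P B)%E].
Proof.
move=> mB; split.
- by [].
- by split => //; rewrite setTI probability_setT mul1e.
- move=> A C CA [mA PA] [mC PC]; split; first exact: measurableD.
  have E1 : (A `\` C) `&` B = (A `&` B) `\` (C `&` B).
    apply/seteqP; split => w /=; first by move=> [[Aw nCw] Bw]; split => // -[].
    by move=> [[Aw Bw] H]; split => //; split => // Cw; apply: H.
  have E2 : (A `&` B) `&` (C `&` B) = C `&` B.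
    apply/seteqP; split => w /=; first by move=> [_ ?].
    by move=> [Cw Bw]; split => //; split => //; apply: CA.
  have E3 : A `&` C = C by apply/setIidr.
  have h1 : P ((A `&` B) `\` (C `&` B)) = (P (A `&` B) - P (C `&` B))%E.
    rewrite -[in RHS]E2; apply: measureD; [exact: measurableI|exact: measurableI|].
    exact: (le_lt_trans (probability_le1 _ (measurableI _ _ mA mB)) (ltry 1)).
  have h2 : P (A `\` C) = (P A - P C)%E.
    rewrite -[in RHS]E3; apply: measureD => //.
    exact: (le_lt_trans (probability_le1 _ mA) (ltry 1)).
  rewrite E1 h1 h2 PA PC.
  rewrite (Pfin P mA) (Pfin P mB) (Pfin P mC) -!EFinM -EFinB.
  by congr EFin; ring.
- move=> F ndF HF.
  have mF i : measurable (F i) by have [] := HF i.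
  split; first exact: bigcup_measurable.
  rewrite setI_bigcupl.
  have ndG : nondecreasing_seq (fun i => F i `&` B).
    by move=> i j ij; apply/subsetPset; apply: setSI; apply/subsetPset/ndF.
  have c1 := nondecreasing_cvg_mu (mu:=P) (fun i => measurableI _ _ (mF i) mB)
     (bigcup_measurable (fun k _ => measurableI _ _ (mF k) mB)) ndG.
  have c2 := nondecreasing_cvg_mu (mu:=P) mF (bigcup_measurable (fun k _ => mF k)) ndF.
  have c3 := cvgeZr (fin_num_measure P _ mB) c2.
  have c4 : (P \o (fun i => F i `&` B)) @ \oo --> (P (\bigcup_n F n) * P B)%E.
    apply: cvg_trans c3; apply: near_eq_cvg; near=> n => /=.
    by have [_ ->] := HF n.
  exact: (cvg_unique _ c1 c4).
Unshelve. all: by end_near.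
Qed.

Lemma indep_ext (G1 G2 : set (set Omega)) :
  setI_closed G1 -> setI_closed G2 ->
  G1 `<=` measurable -> G2 `<=` measurable ->
  (forall A B, G1 A -> G2 B -> P (A `&` B) = (P A * P B)%E) ->
  forall A B, <<s G1 >> A -> <<s G2 >> B -> P (A `&` B) = (P A * P B)%E.
Proof.
move=> I1 I2 m1 m2 H.
have step1 B : G2 B -> <<s G1 >> `<=` [set A | measurable A /\ P (A `&` B) = (P A * P B)%E].
  move=> GB; apply: lambda_system_subset => //.
  - exact: lam (m2 _ GB).
  - by move=> A GA; split; [exact: m1|exact: H].
have sub1 : <<s G1 >> `<=` measurable.
  exact: smallest_sub (@sigma_algebra_measurable _ _) m1.
move=> A B sA sB.
have mA := sub1 _ sA.
have H2 : <<s G2 >> `<=` [set B | measurable B /\ P (B `&` A) = (P B * P A)%E].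
  apply: lambda_system_subset => //; first exact: lam mA.
  move=> B' GB'; split; first exact: m2.
  by rewrite setIC muleC; have [_ ->] := step1 _ GB' _ sA.
by have [_] := H2 _ sB; rewrite setIC muleC.
Qed.
End Ind.


Lemma measurable_inv (R : realType) : measurable_fun [set: R] (@GRing.inv R).
Proof.
have -> : [set: R] = [set 0] `|` [set x | x != 0].
  by apply/seteqP; split => x // _; case: (eqVneq x 0) => [->|]; [left|right].
apply/measurable_funU => //.
  by apply: open_measurable; exact: open_neq.
split; first exact: measurable_fun_set1.
apply: open_continuous_measurable_fun; first exact: open_neq.
by move=> x; rewrite inE /= => x0; apply: inv_continuous.
Qed.

Section LLRm.
Context (R : realType) (m d : nat) (S : finType)
  (mu : {ffun 'I_m -> bool} -> S) (p : S -> d.-tuple R -> R)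
  (hp : forall s, measurable_fun [set: d.-tuple R] (p s)).

Lemma measurable_qbit j b : measurable_fun setT (qbit mu p j b).
Proof.
rewrite /qbit; apply: measurable_funM; first exact: measurable_cst.
have -> : (fun y => \sum_(x : {ffun 'I_m -> bool} | x j == b) p (mu x) y) =
  (fun y => \sum_(x <- index_enum {ffun 'I_m -> bool}) (if x j == b then p (mu x) y else 0)).
  by apply/funext => y; rewrite big_mkcond.
apply: measurable_sum => x /=; case: (x j == b) => //; exact: measurable_cst.
Qed.

Lemma measurable_LLR j : measurable_fun setT (LLR mu p j).
Proof.
rewrite /LLR; apply: measurableT_comp; first exact: measurable_ln.
apply: measurable_funM; first exact: measurable_qbit.
apply: measurableT_comp; first exact: measurable_inv.
exact: measurable_qbit.
Qed.

End LLRm.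

Section Rect.
Context (R : realType) (m d : nat) (S : finType)
  (mu : {ffun 'I_m -> bool} -> S) (p : S -> d.-tuple R -> R)
  (d0 : measure_display) (Omega : measurableType d0) (P : probability Omega R)
  (X : nat -> Omega -> {ffun 'I_m -> bool}) (Y : nat -> Omega -> d.-tuple R).
Context (hXm : forall i x, measurable [set w | X i w = x])
  (hYm : forall i, measurable_fun [set: Omega] (Y i))
  (hlaw : forall (N : nat) (x : nat -> {ffun 'I_m -> bool})
          (A : nat -> set (d.-tuple R)),
     (forall i, measurable (A i)) ->
     P [set w | forall i, (i < N)%N -> X i w = x i /\ A i (Y i w)] =
     (\prod_(i < N) (((2 ^ m)%:R)^-1 *
        fine (lebint (fun y => ((\1_(A i) y : R) * p (mu (x i)) y)%:E))))%:E).

Local Notation FF := {ffun 'I_m -> bool}.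

Definition ext N (xs : {ffun 'I_N -> FF}) (i : nat) : FF :=
  if insub i is Some j then xs j else [ffun=> true].

Lemma extE N xs (i : 'I_N) : ext xs i = xs i.
Proof. by rewrite /ext valK. Qed.

Definition rect N (C : nat -> pred FF) (A : nat -> set (d.-tuple R)) : set Omega :=
  [set w | forall i, (i < N)%N -> C i (X i w) /\ A i (Y i w)].

Definition lint (A : set (d.-tuple R)) (x : FF) : R :=
  fine (lebint (fun y => ((\1_A y : R) * p (mu x) y)%:E)).

Definition gg (C : pred FF) (A : set (d.-tuple R)) : R :=
  ((2 ^ m)%:R)^-1 * \sum_(x | C x) lint A x.

Lemma measY i A : measurable A -> measurable [set w | A (Y i w)].
Proof. by move=> mA; have := hYm i measurableT mA; rewrite setTI. Qed.

Lemma P_rect N C A : (forall i, measurable (A i)) ->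
  measurable (rect N C A) /\ P (rect N C A) = (\prod_(i < N) gg (C i) (A i))%:E.
Proof.
move=> mA.
pose Sx (xs : {ffun 'I_N -> FF}) :=
  [set w | forall i, (i < N)%N -> X i w = ext xs i /\ A i (Y i w)].
pose Fx (xs : {ffun 'I_N -> FF}) := if [forall i : 'I_N, C i (xs i)] then Sx xs else set0.
have mSx xs : measurable (Sx xs).
  by apply: meas_forall => i; apply: measurableI; [exact: hXm|exact: measY].
have mFx xs : measurable (Fx xs) by rewrite /Fx; case: ifP.
have dFx xs xs' : xs != xs' -> Fx xs `&` Fx xs' = set0.
  move=> neq; apply/seteqP; split => w // [].
  rewrite /Fx; case: ifP => _ // + ; case: ifP => _ // H1 H2.
  move/eqP: neq; apply; apply/ffunP => i.
  have [E1 _] := H1 i (ltn_ord i); have [E2 _] := H2 i (ltn_ord i).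
  by rewrite -(extE xs) -(extE xs') -E1 -E2.
have rE : rect N C A = Eof Fx (index_enum _).
  apply/seteqP; split => w.
    move=> H; exists [ffun i : 'I_N => X i w]; first by rewrite mem_index_enum.
    rewrite /Fx; case: forallP => [_|[]]; last first.
      by move=> i; rewrite ffunE; have [] := H i (ltn_ord i).
    move=> i iN; have [Ci Ai] := H i iN; split => //.
    by rewrite /ext insubT /= ffunE.
  move=> [xs _]; rewrite /Fx; case: forallP => // Hc H i iN.
  have [Xi Ai] := H i iN; split => //.
  by rewrite Xi /ext insubT; exact: (Hc (Sub i iN)).
have [mR PR] := Eof_sum P (index_enum_uniq _) mFx dFx.
rewrite rE; split => //; rewrite PR.
have -> : (\sum_(xs <- index_enum {ffun 'I_N -> FF}) P (Fx xs) =
   \sum_(xs <- index_enum {ffun 'I_N -> FF})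
     (\prod_(i < N) ((C i (xs i))%:R * (((2 ^ m)%:R)^-1 * lint (A i) (xs i))))%:E)%E.
  apply: eq_bigr => xs _; rewrite /Fx; case: forallP => [Hc|Hc].
    rewrite hlaw //; congr EFin; apply: eq_bigr => i _.
    by rewrite Hc mul1r extE.
  rewrite measure0; move: Hc => /existsNP [i /negP/negbTE Ci].
  by rewrite (bigD1 i) //= Ci mul0r mul0r.
rewrite sumEFin; congr EFin.
rewrite (eq_bigr (fun i : 'I_N => \sum_(x : FF)
   ((C i x)%:R * (((2 ^ m)%:R)^-1 * lint (A i) x)))); last first.
  move=> i _; rewrite /gg big_mkcond /= mulr_sumr; apply: eq_bigr => x _.
  by case: (C i x); rewrite ?mul1r ?mul0r ?mulr0.
rewrite bigA_distr_bigA /=; apply: eq_bigr => xs _.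
by apply: eq_bigr => i _; case: (C i (xs i)); rewrite ?mul1r ?mul0r ?mulr0.
Qed.


Context (hp : forall s, measurable_fun [set: d.-tuple R] (p s))
  (hp1 : forall s, lebint (fun y => (p s y)%:E) = 1%E).

Definition RS N (J : pred nat) : set (set Omega) :=
  [set E | exists (C : nat -> pred FF) (A : nat -> set (d.-tuple R)),
     [/\ (forall i, measurable (A i)),
         (forall i, ~~ J i -> (forall x, C i x) /\ A i = setT) &
         E = rect N C A]].

Lemma rectI N C1 A1 C2 A2 : rect N C1 A1 `&` rect N C2 A2 =
  rect N (fun i x => C1 i x && C2 i x) (fun i => A1 i `&` A2 i).
Proof.
apply/seteqP; split => w /=.
  move=> [H1 H2] i iN; have [a b] := H1 i iN; have [c e] := H2 i iN.
  by split; [apply/andP|].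
by move=> H; split => i iN; have [/andP[? ?] [? ?]] := H i iN.
Qed.

Lemma RS_setI N J : setI_closed (RS N J).
Proof.
move=> _ _ [C1 [A1 [mA1 t1 ->]]] [C2 [A2 [mA2 t2 ->]]].
exists (fun i x => C1 i x && C2 i x), (fun i => A1 i `&` A2 i); split.
- by move=> i; exact: measurableI.
- move=> i Ji; have [h1 ->] := t1 i Ji; have [h2 ->] := t2 i Ji.
  by split; [move=> x; rewrite h1 h2|exact: setIT].
- exact: rectI.
Qed.

Lemma RS_meas N J : RS N J `<=` measurable.
Proof. by move=> _ [C [A [mA _ ->]]]; have [] := P_rect N C mA. Qed.

Lemma gg_eq (C C' : pred FF) A : C =1 C' -> gg C A = gg C' A.
Proof. by move=> H; rewrite /gg (eq_bigl _ _ H). Qed.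

Lemma gg_T (C : pred FF) : (forall x, C x) -> gg C setT = 1.
Proof.
move=> HC; rewrite /gg.
have -> : \sum_(x | C x) lint setT x = \sum_(x : FF) 1.
  rewrite (eq_bigl predT) //; apply: eq_bigr => x _; rewrite /lint.
  have -> : (fun y => ((\1_setT y : R) * p (mu x) y)%:E) = (fun y => (p (mu x) y)%:E).
    by apply/funext => y; rewrite indicT mul1r.
  by rewrite hp1.
rewrite sumr_const card_ffun card_bool card_ord.
by rewrite mulVf // pnatr_eq0 expn_eq0.
Qed.

Lemma RS_indep N J1 J2 : (forall i, ~~ (J1 i && J2 i)) ->
  forall A B, RS N J1 A -> RS N J2 B -> P (A `&` B) = (P A * P B)%E.
Proof.
move=> dis _ _ [C1 [A1 [mA1 t1 ->]]] [C2 [A2 [mA2 t2 ->]]].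
rewrite rectI.
have [_ ->] := P_rect N (fun i x => C1 i x && C2 i x) (fun i => measurableI _ _ (mA1 i) (mA2 i)).
have [_ ->] := P_rect N C1 mA1; have [_ ->] := P_rect N C2 mA2.
rewrite -EFinM -big_split /=; congr EFin; apply: eq_bigr => i _.
case J1i : (J1 i).
- have nJ2 : ~~ J2 i by move: (dis i); rewrite J1i.
  have [h ->] := t2 i nJ2; rewrite setIT (gg_T h) mulr1.
  by apply: gg_eq => x; rewrite h andbT.
- have [h ->] := t1 i (negbT J1i); rewrite setTI (gg_T h) mul1r.
  by apply: gg_eq => x; rewrite h.
Qed.

Lemma sig_indep N J1 J2 : (forall i, ~~ (J1 i && J2 i)) ->
  forall A B, <<s RS N J1 >> A -> <<s RS N J2 >> B -> P (A `&` B) = (P A * P B)%E.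
Proof.
move=> dis; apply: indep_ext; [exact: RS_setI|exact: RS_setI|exact: RS_meas|exact: RS_meas|].
exact: RS_indep.
Qed.

Lemma sig_meas N J : <<s RS N J >> `<=` measurable.
Proof. exact: smallest_sub (@sigma_algebra_measurable _ _) (@RS_meas N J). Qed.

Lemma Om_Y N (J : pred nat) (i : nat) : J i -> (i < N)%N ->
  measurable_fun [set: g_sigma_algebraType (RS N J)]
    (Y i : g_sigma_algebraType (RS N J) -> d.-tuple R).
Proof.
move=> Ji iN _ B mB; rewrite setTI.
apply: sub_sigma_algebra.
exists (fun _ _ => true), (fun k => if k == i then B else setT); split.
- by move=> k; case: ifP.
- by move=> k Jk; split => //; case: eqP => // ki; rewrite ki Ji in Jk.
- apply/seteqP; split => w /=.
    by move=> Bw k kN; split => //; case: eqP => // ->.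
  by move=> H; have [_] := H i iN; rewrite eqxx.
Qed.

Lemma Om_X N (J : pred nat) (i : nat) (Q : pred FF) : J i -> (i < N)%N ->
  (RS N J).-sigma.-measurable [set w | Q (X i w)].
Proof.
move=> Ji iN; apply: sub_sigma_algebra.
exists (fun k => if k == i then Q else predT), (fun k => setT); split.
- by [].
- by move=> k Jk; split => //; case: eqP => // ki; rewrite ki Ji in Jk.
- apply/seteqP; split => w /=.
    by move=> Qw k kN; split => //; case: eqP => // ->.
  by move=> H; have [] := H i iN; rewrite eqxx.
Qed.

Definition Tn N (w : Omega) : 'I_N * 'I_m -> R := fun k => LLR mu p k.2 (Y k.1 w).
Definition condb N (T : 'I_N * 'I_m -> R) (k k' : 'I_N * 'I_m) : bool :=
  (`|T k'| < `|T k|) || ((`|T k'| == `|T k|) && (enc k' <= enc k)%N).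
Definition errb N (T : 'I_N * 'I_m -> R) (x : 'I_N -> FF) k : bool :=
  sgnR (T k) * pm (x k.1 k.2) < 0.
Definition Ev N (a : ('I_N * 'I_m) * ('I_N * 'I_m)) : set Omega :=
  [set w | condb (@Tn N w) a.1 a.2 && errb (@Tn N w) (fun i => X i w) a.1].
Definition Ja N (a : ('I_N * 'I_m) * ('I_N * 'I_m)) : pred nat :=
  fun i => (i == a.1.1) || (i == a.2.1).
Definition dep N (a b : ('I_N * 'I_m) * ('I_N * 'I_m)) : bool :=
  [|| a.1.1 == b.1.1, a.1.1 == b.2.1, a.2.1 == b.1.1 | a.2.1 == b.2.1].

Lemma sgn_pm (t : R) b :
  (sgnR t * pm b < 0) = ((0 <= t) && ~~ b) || (~~ (0 <= t) && b).
Proof.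
rewrite /sgnR /pm; case: (0 <= t); case: b => /=;
  rewrite ?mulr1 ?mul1r ?mulrN1 ?mulN1r ?opprK ?ltr10 ?ltrN10 //.
Qed.

Lemma Ev_sig N (a : ('I_N * 'I_m) * ('I_N * 'I_m)) : <<s RS N (Ja a) >> (Ev a).
Proof.
set J := Ja a.
have mT (k : 'I_N * 'I_m) : J k.1 ->
    measurable_fun [set: g_sigma_algebraType (RS N J)]
      (fun w : g_sigma_algebraType (RS N J) => LLR mu p k.2 (Y k.1 w)).
  move=> Jk; apply: measurableT_comp; first exact: measurable_LLR.
  exact: Om_Y.
have mX (k : 'I_N * 'I_m) : J k.1 ->
    measurable_fun [set: g_sigma_algebraType (RS N J)]
      (fun w : g_sigma_algebraType (RS N J) => X k.1 w k.2).
  move=> Jk; apply: (measurable_fun_bool true); rewrite setTI.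
  exact: (Om_X (fun x : FF => x k.2) Jk (ltn_ord _)).
have J1 : J a.1.1 by rewrite /J /Ja eqxx.
have J2 : J a.2.1 by rewrite /J /Ja eqxx orbT.
have mA (k : 'I_N * 'I_m) : J k.1 ->
    measurable_fun [set: g_sigma_algebraType (RS N J)]
      (fun w : g_sigma_algebraType (RS N J) => `|LLR mu p k.2 (Y k.1 w)|).
  by move=> Jk; apply: measurableT_comp (mT k Jk); exact: normr_measurable.
have meb : measurable_fun [set: g_sigma_algebraType (RS N J)]
    (fun w : g_sigma_algebraType (RS N J) =>
       condb (@Tn N w) a.1 a.2 && errb (@Tn N w) (fun i => X i w) a.1).
  rewrite /condb /errb /Tn.
  under eq_fun do rewrite sgn_pm.
  apply: measurable_and.
    apply: measurable_or; first exact: measurable_fun_ltr (mA _ J2) (mA _ J1).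
    apply: measurable_and; first exact: measurable_fun_eqr (mA _ J2) (mA _ J1).
    exact: measurable_cst.
  apply: measurable_or; apply: measurable_and.
  - exact: measurable_fun_ler (measurable_cst _) (mT _ J1).
  - exact: measurable_neg (mX _ J1).
  - exact: measurable_neg (measurable_fun_ler (measurable_cst _) (mT _ J1)).
  - exact: mX.
have := meb measurableT [set true] I.
by rewrite setTI.
Qed.

Lemma Ev_meas N (a : ('I_N * 'I_m) * ('I_N * 'I_m)) : measurable (Ev a).
Proof. by apply: sig_meas; exact: Ev_sig. Qed.

Lemma Ev_indep N (a b : ('I_N * 'I_m) * ('I_N * 'I_m)) : ~~ dep a b ->
  P (Ev a `&` Ev b) = (P (Ev a) * P (Ev b))%E.
Proof.
move=> nd; apply: (@sig_indep N (Ja a) (Ja b)); [|exact: Ev_sig|exact: Ev_sig].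
move=> i; rewrite /Ja; apply/negP => /andP[/orP[/eqP e1|/eqP e1] /orP[/eqP e2|/eqP e2]];
  move: nd; rewrite /dep -!val_eqE /= -e1 -e2 eqxx ?orbT //.
Qed.

Lemma card_sumR (I : finType) (b : pred I) :
  (#|[set k | b k]|)%:R = \sum_k ((b k)%:R : R).
Proof.
rewrite -sum1_card natr_sum big_mkcond /=; apply: eq_bigr => k _.
case: (boolP (k \in [set k | b k])) => [/set_mem -> //|H].
have : ~~ b k by apply: contra H => bk; apply: mem_set.
by move/negbTE ->.
Qed.

Lemma D_eq N w :
  orbgrand_D (fun k : 'I_N * 'I_m => LLR mu p k.2 (Y k.1 w)) (fun i : 'I_N => X i w) =
  ((m * N)%:R^-1) ^+ 2 * \sum_a \1_(@Ev N a) w.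
Proof.
rewrite /orbgrand_D.
set n := ((m * N)%:R : R).
have -> : \sum_a (\1_(@Ev N a) w : R) = \sum_k \sum_k'
   ((condb (@Tn N w) k k')%:R * (errb (@Tn N w) (fun i => X i w) k)%:R).
  rewrite [RHS]pair_bigA /=; apply: eq_bigr => a _; rewrite indicE.
  have -> : (w \in @Ev N a) = condb (@Tn N w) a.1 a.2 && errb (@Tn N w) (fun i => X i w) a.1.
    by apply/idP/idP => [/set_mem|/mem_set].
  by rewrite -mulnb natrM.
rewrite expr2 -mulrA; congr (_ * _); rewrite mulr_sumr; apply: eq_bigr => k _.
rewrite /rankT (card_sumR (fun k' => condb (@Tn N w) k k')).
by rewrite mulrAC mulrC mulr_suml.
Qed.

Lemma pr01 (A : set Omega) : measurable A -> 0 <= pr P A <= 1.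
Proof.
move=> mA.
have h1 : (P A <= 1)%E := probability_le1 P mA.
have h2 : (0 <= P A)%E := measure_ge0 P A.
rewrite (Pfin P mA) !lee_fin in h1 h2.
by rewrite h1 h2.
Qed.

Lemma cov_bound N (a b : ('I_N * 'I_m) * ('I_N * 'I_m)) :
  `|pr P (Ev a `&` Ev b) - pr P (Ev a) * pr P (Ev b)| <= (dep a b)%:R.
Proof.
case: (boolP (dep a b)) => h.
  have /andP[x0 x1] := pr01 (measurableI _ _ (Ev_meas a) (Ev_meas b)).
  have /andP[y0 y1] := pr01 (Ev_meas a).
  have /andP[z0 z1] := pr01 (Ev_meas b).
  have p0 : 0 <= pr P (Ev a) * pr P (Ev b) by rewrite mulr_ge0.
  have p1 : pr P (Ev a) * pr P (Ev b) <= 1 by rewrite mulr_ile1.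
  have -> : ((true : nat)%:R : R) = 1 by [].
  rewrite ler_norml; apply/andP; split; lra.
have := Ev_indep h.
rewrite (Pfin P (measurableI _ _ (Ev_meas a) (Ev_meas b))) (Pfin P (Ev_meas a)) (Pfin P (Ev_meas b)).
by rewrite -EFinM => -[->]; rewrite subrr normr0.
Qed.

Lemma bool4 (a b c e : bool) :
  (([|| a, b, c | e]) : nat)%:R <= (a : nat)%:R + (b : nat)%:R + (c : nat)%:R + (e : nat)%:R :> R.
Proof. by case: a; case: b; case: c; case: e => /=; lra. Qed.

Lemma cnt_fst N (t : 'I_N) :
  \sum_(k : 'I_N * 'I_m) (((k.1 == t) : nat)%:R : R) = m%:R.
Proof.
rewrite -(pair_bigA _ (fun (i : 'I_N) (j : 'I_m) => (((i == t) : nat)%:R : R))) /=.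
under eq_bigr do rewrite sumr_const card_ord.
rewrite (bigD1 t) //= eqxx big1 ?addr0 //.
by move=> i /negbTE ->; rewrite mul0rn.
Qed.

Lemma cnt_pair N (G : 'I_N * 'I_m -> R) :
  \sum_(b : ('I_N * 'I_m) * ('I_N * 'I_m)) G b.1 = \sum_k G k * (N * m)%:R.
Proof.
rewrite -(pair_bigA _ (fun k (k' : 'I_N * 'I_m) => G k)) /=.
by apply: eq_bigr => k _; rewrite sumr_const card_prod !card_ord mulr_natr.
Qed.

Lemma cnt_pair2 N (G : 'I_N * 'I_m -> R) :
  \sum_(b : ('I_N * 'I_m) * ('I_N * 'I_m)) G b.2 = \sum_k G k * (N * m)%:R.
Proof.
rewrite -(pair_bigA _ (fun (k' : 'I_N * 'I_m) k => G k)) /=.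
rewrite exchange_big /=.
by apply: eq_bigr => k _; rewrite sumr_const card_prod !card_ord mulr_natr.
Qed.

Lemma dep_sum N (a : ('I_N * 'I_m) * ('I_N * 'I_m)) :
  \sum_b ((dep a b : nat)%:R : R) <= 4 * m%:R * (N * m)%:R.
Proof.
apply: (le_trans (ler_sum _ (fun (b : ('I_N * 'I_m) * ('I_N * 'I_m)) _ =>
  bool4 (a.1.1 == b.1.1) (a.1.1 == b.2.1) (a.2.1 == b.1.1) (a.2.1 == b.2.1)))).
rewrite !big_split /= (cnt_pair (fun k => ((a.1.1 == k.1) : nat)%:R))
  (cnt_pair2 (fun k => ((a.1.1 == k.1) : nat)%:R))
  (cnt_pair (fun k => ((a.2.1 == k.1) : nat)%:R))
  (cnt_pair2 (fun k => ((a.2.1 == k.1) : nat)%:R)).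
rewrite -!mulr_suml.
have E t : \sum_(k : 'I_N * 'I_m) (((t == k.1) : nat)%:R : R) = m%:R.
  by rewrite -(cnt_fst t); apply: eq_bigr => k _; rewrite eq_sym.
rewrite !E; lra.
Qed.

Lemma var_bound N : (0 < m)%N -> (0 < N)%N ->
  `|varP P (fun w => orbgrand_D (fun k : 'I_N * 'I_m => LLR mu p k.2 (Y k.1 w))
                  (fun i : 'I_N => X i w))| <= 4 / N%:R.
Proof.
move=> m0 N0.
have -> : (fun w => orbgrand_D (fun k : 'I_N * 'I_m => LLR mu p k.2 (Y k.1 w))
                  (fun i : 'I_N => X i w)) =
    (fun w => ((m * N)%:R^-1) ^+ 2 * \sum_a \1_(@Ev N a) w).
  by apply/funext => w; exact: D_eq.
rewrite varP_sum; last exact: Ev_meas.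
set SS := \sum_a \sum_b _.
have hS : `|SS| <= ((N * m) * (N * m))%:R * (4 * m%:R * (N * m)%:R).
  apply: le_trans (ler_norm_sum _ _ _) _.
  apply: le_trans (ler_sum _ (fun a _ => ler_norm_sum _ _ _)) _.
  apply: le_trans (ler_sum _ (fun a _ => ler_sum _ (fun b _ => cov_bound a b))) _.
  apply: le_trans (ler_sum _ (fun a _ => dep_sum a)) _.
  by rewrite sumr_const !card_prod !card_ord [X in _ <= X]mulr_natl.
rewrite normrM ger0_norm ?exprn_ge0 ?invr_ge0 ?ler0n //.
apply: le_trans (ler_wpM2l _ hS) _; first by rewrite !exprn_ge0 ?invr_ge0 ?ler0n.
have mR : (m%:R : R) != 0 by rewrite pnatr_eq0 -lt0n.
have NR : (N%:R : R) != 0 by rewrite pnatr_eq0 -lt0n.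
rewrite !natrM le_eqVlt; apply/orP; left; apply/eqP.
by field; apply/andP; split.
Qed.

Lemma lim_main : (0 < m)%N ->
  (fun N : nat =>
     varP P (fun w =>
       orbgrand_D (fun k : 'I_N * 'I_m => LLR mu p k.2 (Y k.1 w))
                  (fun i : 'I_N => X i w)))
    @ \oo --> 0.
Proof.
move=> m0; apply/cvgr0Pnorm_le => e e0.
near=> N.
have N0 : (0 < N)%N by near: N; exact: nbhs_infty_gt.
apply: le_trans (var_bound m0 N0) _.
have hN : 4 / e < N%:R by near: N; exact: nbhs_infty_gtr.
have NR : (0 : R) < N%:R by rewrite ltr0n.
rewrite ler_pdivrMr //.
move: hN; rewrite ltr_pdivrMr // => hN.
by rewrite mulrC; apply: ltW.
Unshelve. all: by end_near.
Qed.
End Rect.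


Unset Implicit Arguments.

Theorem lemma8
  (R : realType) (m d : nat) (S : finType)
  (mu : {ffun 'I_m -> bool} -> S) (p : S -> d.-tuple R -> R)
  (d0 : measure_display) (Omega : measurableType d0) (P : probability Omega R)
  (X : nat -> Omega -> {ffun 'I_m -> bool}) (Y : nat -> Omega -> d.-tuple R) :
  (1 <= m)%N ->
  #|S| = (2 ^ m)%N ->
  bijective mu ->
  (* p(.|s) are transition densities on R^d *)
  (forall s, measurable_fun [set: d.-tuple R] (p s)) ->
  (forall s y, 0 <= p s y) ->
  (forall s, lebint (fun y => (p s y)%:E) = 1%E) ->
  (* (A1) *)
  (forall j : 'I_m, exists (M1 a : R) (S1 : {poly R}), 0 < M1 /\ 0 < a /\
     forall y, M1 < eucl y ->
       qbit mu p j true y < S1.[eucl y] * expR (- (a * eucl y)) /\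
       qbit mu p j false y < S1.[eucl y] * expR (- (a * eucl y))) ->
  (* (A2) *)
  (forall j : 'I_m, exists (M2 : R) (S2 : {poly R}), 0 < M2 /\
     forall y, M2 < eucl y -> `|LLR mu p j y| < S2.[eucl y]) ->
  (* (A3) *)
  (forall j : 'I_m,
     smooth_on [set t | 0 < t] (Psi mu p j) /\
     smooth_on [set u | 0 < u < 1] (cdf_inv (Psi mu p j))) ->
  smooth_on [set t | 0 < t] (Psibar mu p) ->
  smooth_on [set u | 0 < u < 1] (cdf_inv (Psibar mu p)) ->
  (* random coding, message 1 sent: X i = bits of symbol i of codeword 1,
     Y i = channel output; the joint law of (X_i, Y_i)_{i<N}: bits i.i.d.
     uniform, outputs conditionally independent with densities p(.|mu(X_i)) *)
  (forall i x, measurable [set w | X i w = x]) ->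
  (forall i, measurable_fun [set: Omega] (Y i)) ->
  (forall (N : nat) (x : nat -> {ffun 'I_m -> bool})
          (A : nat -> set (d.-tuple R)),
     (forall i, measurable (A i)) ->
     P [set w | forall i, (i < N)%N -> X i w = x i /\ A i (Y i w)] =
     (\prod_(i < N) (((2 ^ m)%:R)^-1 *
        fine (lebint (fun y => ((\1_(A i) y : R) * p (mu (x i)) y)%:E))))%:E) ->
  (fun N : nat =>
     varP P (fun w =>
       orbgrand_D (fun k : 'I_N * 'I_m => LLR mu p k.2 (Y k.1 w))
                  (fun i : 'I_N => X i w)))
    @ \oo --> 0.
Proof.
move=> hm _ _ hp _ hp1 _ _ _ _ _ hXm hYm hlaw.
exact: (lim_main hXm hYm hlaw hp hp1 hm).
Qed.
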